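(* Let $0\le R'\le (1-p)^{|\mathcal E|}$ and let $M\ge1$ be an integer. Then, in the symmetric-erasure retransmission model described in the context, $$P\Big(\min_{v\in\mathcal V} n_v(M) < R'M\Big)\;\le\; N\,2^{-M\,D\left(R',(1-p)^{|\mathcal E|}\right)} .$$ In particular, for every $R'<(1-p)^{|\mathcal E|}$ this probability decays exponentially in $M$ (for every $p<1$).
   Context: Let $\mathcal G=(\mathcal V,\mathcal E)$ be a finite connected undirected simple graph with $N=|\mathcal V|$ vertices and maximum degree $\Delta$; $\mathcal N_v$ denotes the set of neighbours of $v$. Fix an erasure probability $p\in[0,1]$. Erasures are symmetric: for every undirected edge $e\in\mathcal E$ and every round $t\ge 1$ there is a random variable $S^e_t\in\{0,1\}$ with $P(S^e_t=1)=1-p$ ($S^e_t=1$ means the edge works in round $t$, $S^e_t=0$ means the packets in both directions on $e$ are erased in round $t$), and all these variables are mutually independent. The retransmission protocol for distributed consensus is described by integer state variables $n_{vu}(t)$, for every ordered pair $(v,u)$ with $u\in\mathcal N_v$ and every $t\ge 0$ (the index of the latest iterate of node $u$ available at node $v$ after round $t$), together with $n_v(t)=1+\min_{u\in\mathcal N_v} n_{vu}(t)$ (the number of iterations of the consensus update $x^v_{k+1}=x^v_k-\epsilon\sum_{u\in\mathcal N_v}(x^v_k-x^u_k)$ that node $v$ has completed after round $t$). Initially $n_{vu}(0)=-1$ for all such pairs (so $n_v(0)=0$), and for all $t\ge 0$ $$n_{vu}(t+1)=n_{vu}(t)+S^{\{u,v\}}_{t+1}\cdot\mathbf 1\{n_u(t)>n_{vu}(t)\}.$$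 Node $u$ is said to transmit a ''wait'' to node $v$ in round $t+1$ iff $n_{vu}(t)=n_u(t)$. $D(q,p)=q\log_2\frac qp+(1-q)\log_2\frac{1-q}{1-p}$ is the binary Kullback–Leibler divergence (with $0\log 0=0$). *)

(* Defs.v *)
From mathcomp Require Import all_boot.
From Stdlib Require Import Reals ZArith.

Set Implicit Arguments.
Unset Strict Implicit.
Unset Printing Implicit Defensive.

Section Model.
Variable T : finType.
Variable adj : rel T.

Definition is_edge (e : {set T}) : bool :=
  [exists u, exists v, adj u v && (e == [set u; v])].
Definition Edge : finType := {e : {set T} | is_edge e}.

Definition nedges : nat := #|{: Edge}|.

(* finite outcome space of the erasure variables for rounds 1..M:
   s (t, e) = S^e_{t+1} for t : 'I_M *)
Definition Omega (M : nat) : finType := {ffun ('I_M * Edge)%type -> bool}.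

Definition weight (p : R) (M : nat) (s : Omega M) : R :=
  \big[Rmult/1%R]_(i : ('I_M * Edge)%type) (if s i then (1 - p)%R else p).

Definition Prob (p : R) (M : nat) (A : pred (Omega M)) : R :=
  \big[Rplus/0%R]_(s : Omega M) (if A s then weight p s else 0%R).

(* minimum of a nonempty list of integers (0 on the empty list, never used
   on it since every vertex of a connected graph with N >= 2 has a neighbour) *)
Definition minZ (l : seq Z) : Z :=
  match l with [::] => 0%Z | x :: r => foldr Z.min x r end.

Definition nv (n : T -> T -> Z) (v : T) : Z :=
  (1 + minZ [seq n v u | u <- enum T & adj v u])%Z.

(* value of S^{u,v}_{t+1} in outcome s (t < M); false outside the horizon
   or on non-edges (never used there) *)
Definition Sval (M : nat) (s : Omega M) (t : nat) (u v : T) : bool :=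
  match insub t, insub [set u; v] with
  | Some t', Some e => s (t', e)
  | _, _ => false
  end.

Fixpoint nstate (M : nat) (s : Omega M) (t : nat) : T -> T -> Z :=
  match t with
  | 0 => fun _ _ => (-1)%Z
  | t'.+1 =>
      let n := nstate s t' in
      fun v u => (n v u +
                  (if Sval s t' u v && (n v u <? nv n u)%Z then 1 else 0))%Z
  end.

Definition min_nv (M : nat) (s : Omega M) (t : nat) : Z :=
  minZ [seq nv (nstate s t) v | v <- enum T].

End Model.

Definition log2 (x : R) : R := (ln x / ln 2)%R.

(* Binary KL divergence D(q,p) for q,p in [0,1], with 0 log 0 = 0;
   None stands for +infinity (some term a*log2(a/0) with a>0). *)
Definition kl_term (a b : R) : option R :=
  if Req_EM_T a 0 then Some 0%R
  else if Req_EM_T b 0 then None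
  else Some (a * log2 (a / b))%R.

Definition KL (q p : R) : option R :=
  match kl_term q p, kl_term (1 - q) (1 - p) with
  | Some x, Some y => Some (x + y)%R
  | _, _ => None
  end.

(* N * 2^(-M D), read as 0 when D = +infinity *)
Definition chernoff_bound (N M : nat) (D : option R) : R :=
  match D with
  | Some d => (INR N * Rpower 2 (- (INR M) * d))%R
  | None => 0%R
  end.

(* Main.v *)
From HB Require Import structures.
Require Import Defs.
From mathcomp Require Import all_boot.
From Stdlib Require Import Reals ZArith Lra Lia.


Lemma foldr_min_le_x (x : Z) (r : seq Z) : (foldr Z.min x r <= x)%Z.
Proof. elim: r => [|y r IH] /=; lia. Qed.

Lemma foldr_min_ge (a x : Z) (r : seq Z) :
  (a <= x)%Z -> (forall y, List.In y r -> (a <= y)%Z) -> (a <= foldr Z.min x r)%Z.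
Proof.
elim: r => [|y r IH] //= ax H.
apply Z.min_glb; first by apply: H; left.
apply: IH => // z Hz; apply: H; by right.
Qed.

Lemma foldr_min_le_in (x y : Z) (r : seq Z) : List.In y r -> (foldr Z.min x r <= y)%Z.
Proof.
elim: r => [|z r IH] //= [->|H]; first lia.
have := IH H; lia.
Qed.

Lemma minZ_map_le (T : eqType) (f : T -> Z) (l : seq T) u :
  u \in l -> (minZ (map f l) <= f u)%Z.
Proof.
case: l => [|x r] //=; rewrite in_cons => /orP [/eqP ->|H].
  exact: foldr_min_le_x.
apply: foldr_min_le_in.
elim: r H => [|y r IH] //=; rewrite in_cons => /orP [/eqP ->|H]; [by left| right; exact: IH].
Qed.

Lemma minZ_map_ge (T : eqType) (f : T -> Z) (l : seq T) u a :
  u \in l -> (forall w, w \in l -> (a <= f w)%Z) -> (a <= minZ (map f l))%Z.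
Proof.
case: l => [|x r] //= _ H.
apply: foldr_min_ge; first by apply: H; rewrite mem_head.
move=> y; elim: r H => [|z r IH] //= H [<-|Hy].
  apply: H; by rewrite !in_cons eqxx orbT.
apply: IH => // w Hw; apply: H; rewrite !in_cons in Hw *.
case/orP: Hw => ->; by rewrite ?orbT.
Qed.

Section Det.
Variables (T : finType) (adj : rel T) (M : nat) (s : Omega adj M).
Hypothesis adj_sym : symmetric adj.
Hypothesis nbr : forall v, exists u, adj v u.

Definition rall (t : nat) : bool :=
  match insub t with Some t' => [forall e : Edge adj, s (t', e)] | None => false end.
Definition Kn (t : nat) : nat := \sum_(i < t) rall i.

Lemma rall_Sval t u v : rall t -> adj v u -> Sval s t u v.
Proof.
rewrite /rall /Sval; case: (insub t) => [t'|] //= /forallP H avu.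
case: insubP => [e _ _|] //; first (try exact: H; idtac).
move=> /negP H2; exfalso; apply: H2; apply/existsP; exists u; apply/existsP; exists v.
by rewrite adj_sym avu eqxx.
Qed.

Lemma nv_ge t v : (Z.of_nat (Kn t) <= nv adj (nstate s t) v)%Z.
Proof.
elim: t v => [|t IH] v.
  rewrite /Kn big_ord0 /nv.
  have [u hu] := nbr v.
  have : (-1 <= minZ [seq nstate s 0 v u0 | u0 <- enum T & adj v u0])%Z.
    apply: (@minZ_map_ge _ _ _ u); first by rewrite mem_filter hu mem_enum.
    move=> w _ /=; lia.
  simpl Z.of_nat; lia.
have [u0 hu0] := nbr v.
have hin : u0 \in [seq u <- enum T | adj v u] by rewrite mem_filter hu0 mem_enum.
rewrite /Kn big_ord_recr -/(Kn t) Nat2Z.inj_add.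
set n := nstate s t.
have mono : forall a b, (n a b <= nstate s t.+1 a b)%Z.
  move=> a b /=; rewrite -/n; case: (_ && _); lia.
have IHv := IH v; rewrite -/n in IHv.
case Hr: (rall t).
  have key : forall w, w \in [seq u <- enum T | adj v u] ->
      (Z.of_nat (Kn t) <= nstate s t.+1 v w)%Z.
    move=> w; rewrite mem_filter => /andP [avw _] /=; rewrite -/n.
    rewrite (@rall_Sval t w v Hr avw) /=.
    case: (Z.ltb_spec (n v w) (nv adj n w)) => hlt.
      have := @minZ_map_le _ (fun u => n v u) [seq u <- enum T | adj v u] w.
      rewrite mem_filter avw mem_enum => /(_ isT).
      move: IHv; rewrite /nv => h1 h2; eapply Z.le_trans; [exact h1|]; rewrite (Z.add_comm (n v w)); apply Z.add_le_mono_l; exact h2.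
    have := IH w; rewrite -/n; lia.
  have := @minZ_map_ge _ (fun u => nstate s t.+1 v u) _ u0 _ hin key.
  rewrite /nv => h; change (Z.of_nat true) with 1%Z.
  rewrite (Z.add_comm _ 1); apply: Zplus_le_compat_l; exact h.
have : (minZ [seq n v u | u <- enum T & adj v u] <=
        minZ [seq nstate s t.+1 v u | u <- enum T & adj v u])%Z.
  apply: (@minZ_map_ge _ _ _ u0 _ hin) => w hw.
  have := @minZ_map_le _ (fun u => n v u) _ _ hw => h3; exact: (Z.le_trans _ _ _ h3 (mono v w)).
move: IHv; rewrite /nv => h1 h2; change (Z.of_nat false) with 0%Z.
rewrite Z.add_0_r; apply: (Z.le_trans _ _ _ h1); apply: Zplus_le_compat_l; exact h2.
Qed.

Lemma min_nv_ge (v0 : T) : (Z.of_nat (Kn M) <= min_nv s M)%Z.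
Proof.
rewrite /min_nv; apply: (@minZ_map_ge _ (fun v => nv adj (nstate s M) v) _ v0).
  by rewrite mem_enum.
move=> w _; exact: nv_ge.
Qed.

End Det.
Arguments rall {T adj M} s t.
Arguments Kn {T adj M} s t.
Local Open Scope R_scope.

Lemma pa : associative Rplus. Proof. move=> x y z; ring. Qed.
Lemma ma : associative Rmult. Proof. move=> x y z; ring. Qed.
HB.instance Definition _ := Monoid.isComLaw.Build R 0 Rplus pa Rplus_comm Rplus_0_l.
HB.instance Definition _ := Monoid.isComLaw.Build R 1 Rmult ma Rmult_comm Rmult_1_l.
Lemma m0l : left_zero 0 Rmult. Proof. move=> x; ring. Qed.
Lemma m0r : right_zero 0 Rmult. Proof. move=> x; ring. Qed.
HB.instance Definition _ := Monoid.isMulLaw.Build R 0 Rmult m0l m0r.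
Lemma dl : left_distributive Rmult Rplus. Proof. move=> x y z; ring. Qed.
Lemma dr : right_distributive Rmult Rplus. Proof. move=> x y z; ring. Qed.
HB.instance Definition _ := Monoid.isAddLaw.Build R Rmult Rplus dl dr.

Lemma iter_pow (c : R) (n : nat) : ssrnat.iter n (Rmult c) 1 = c ^ n.
Proof. elim: n => [|n IH] //=; by rewrite IH. Qed.

Lemma prod_if_pow (n : nat) (P : 'I_n -> bool) (z : R) :
  \big[Rmult/1]_(i < n) (if P i then z else 1) = z ^ (\sum_(i < n) P i)%N.
Proof.
elim: n P => [|n IH] P; first by rewrite !big_ord0.
rewrite !big_ord_recr /= IH pow_add; case: (P ord_max) => /=; ring.
Qed.

Lemma sum_le (I : finType) (F G : I -> R) :
  (forall i, F i <= G i) -> \big[Rplus/0]_i F i <= \big[Rplus/0]_i G i.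
Proof. move=> H; apply: (big_ind2 (fun a b => a <= b)) => //; [lra | move=> *; lra]. Qed.

Section P.
Variables (T : finType) (adj : rel T) (p : R) (M : nat).
Hypothesis hp0 : 0 <= p.
Hypothesis hp1 : p <= 1.

Definition w (b : bool) : R := if b then 1 - p else p.

Lemma weight_ge0 (s : Omega adj M) : 0 <= weight p s.
Proof.
rewrite /weight; apply: (big_ind (fun a => 0 <= a)) => //; [lra| move=> *; nra|].
move=> i _; case: (s i); lra.
Qed.

Definition G (z1 z0 : R) (g : {ffun Edge adj -> bool}) : R :=
  \big[Rmult/1]_e w (g e) * (if [forall e, g e] then z1 else z0).

Lemma sumG z1 z0 :
  \big[Rplus/0]_g G z1 z0 g = (1 - p) ^ nedges adj * z1 + (1 - (1 - p) ^ nedges adj) * z0.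
Proof.
rewrite /G.
rewrite (eq_bigr (fun g : {ffun Edge adj -> bool} =>
   \big[Rmult/1]_e w (g e) * z0 +
   (if [forall e, g e] then \big[Rmult/1]_e w (g e) * (z1 - z0) else 0))); last first.
  move=> g _; case: ifP => _; ring.
rewrite big_split /= -big_distrl /=.
rewrite -(bigA_distr_bigA (fun (_ : Edge adj) b => w b)) /=.
have -> : \big[Rmult/1]_(e : Edge adj) \big[Rplus/0]_(b : bool) w b = 1.
  apply: big1 => e _; rewrite big_bool /w /=; ring.
rewrite (bigD1 [ffun=> true]) //=.
have H0 : \big[Rplus/0]_(i | i != [ffun=> true])
      (if [forall e, (i : {ffun Edge adj -> bool}) e] then \big[Rmult/1]_e w (i e) * (z1 - z0) else 0) = 0.
  apply: big1 => g hg; case: ifP => // /forallP H; exfalso; move/eqP: hg; apply.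
  by apply/ffunP => e; rewrite ffunE H.
rewrite H0.
have -> : [forall e, [ffun=> true] (e : Edge adj)] by apply/forallP => e; rewrite ffunE.
have -> : \big[Rmult/1]_(e : Edge adj) w ([ffun=> true] e) = (1 - p) ^ nedges adj.
  rewrite (eq_bigr (fun _ => 1 - p)); last by move=> e _; rewrite ffunE.
  by rewrite big_const iter_pow.
ring.
Qed.

Definition uncurry (F : {ffun 'I_M -> {ffun Edge adj -> bool}}) : Omega adj M :=
  [ffun x => F x.1 x.2].
Definition curry (s : Omega adj M) : {ffun 'I_M -> {ffun Edge adj -> bool}} :=
  [ffun t => [ffun e => s (t, e)]].

Lemma factor z1 z0 :
  \big[Rplus/0]_(s : Omega adj M)
     (weight p s * \big[Rmult/1]_(t : 'I_M) (if [forall e, s (t, e)] then z1 else z0))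
  = ((1 - p) ^ nedges adj * z1 + (1 - (1 - p) ^ nedges adj) * z0) ^ M.
Proof.
have pt : forall s : Omega adj M,
   weight p s * \big[Rmult/1]_(t : 'I_M) (if [forall e, s (t, e)] then z1 else z0)
   = \big[Rmult/1]_(t : 'I_M) G z1 z0 (curry s t).
  move=> s; rewrite /weight /G.
  rewrite (eq_bigr (fun x => w (s (x.1, x.2)))); last by move=> [t e] _.
  rewrite -(pair_bigA _ (fun t e => w (s (t, e)))) -big_split /=.
  apply: eq_bigr => t _; rewrite /curry ffunE.
  congr (_ * _); first by apply: eq_bigr => e _; rewrite ffunE.
  congr (if _ then _ else _); apply: eq_forallb => e; by rewrite ffunE.
rewrite (eq_bigr _ (fun s _ => pt s)).
rewrite (reindex uncurry) /=; last first.
  apply: onW_bij; exists curry.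
    move=> F; apply/ffunP => t; apply/ffunP => e; by rewrite !ffunE.
  move=> s; apply/ffunP => [[t e]]; by rewrite !ffunE.
have cuK : forall F, curry (uncurry F) = F.
  move=> F; apply/ffunP => t; apply/ffunP => e; by rewrite !ffunE.
rewrite (eq_bigr (fun F : {ffun 'I_M -> {ffun Edge adj -> bool}} => \big[Rmult/1]_(t < M) G z1 z0 (F t))); last by move=> F _; rewrite cuK.
rewrite -(bigA_distr_bigA (fun (_ : 'I_M) g => G z1 z0 g)) /=.
by rewrite big_const_ord iter_pow sumG.
Qed.

End P.

Lemma ln_div' x y : 0 < x -> 0 < y -> ln (x / y) = ln x - ln y.
Proof.
move=> hx hy; rewrite /Rdiv ln_mult ?ln_Rinv //; try lra; exact: Rinv_0_lt_compat.
Qed.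

Lemma chern_alg (q a : R) (M : nat) : 0 < a -> a < q -> q < 1 ->
  (q * (a*(1-q)/((1-a)*q)) + (1-q)*1)^M * / Rpower (a*(1-q)/((1-a)*q)) (a * INR M)
  = Rpower 2 (- INR M * (a * log2 (a/q) + (1-a) * log2 ((1-a)/(1-q)))).
Proof.
move=> ha haq hq.
have h1a : 0 < 1 - a by lra.
have h1q : 0 < 1 - q by lra.
have hq0 : 0 < q by lra.
have hc : q * (a*(1-q)/((1-a)*q)) + (1-q)*1 = (1-q)/(1-a) by field; lra.
have cpos : 0 < (1-q)/(1-a) by apply: Rdiv_lt_0_compat.
rewrite hc -Rpower_pow // /Rpower -exp_Ropp -exp_plus; congr exp.
have hl2 : 0 < ln 2 by have := ln_lt_2; lra.
rewrite /log2 !ln_div' //; try (apply: Rmult_lt_0_compat; lra); try lra.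
rewrite !ln_mult //; field; lra.
Qed.

Lemma pow_le_base (x : R) (n : nat) : 0 <= x <= 1 -> n <> 0%nat -> x ^ n <= x.
Proof.
move=> hx; case: n => [|n] // _.
have : x ^ n <= 1.
  elim: n => [|n IH] /=; first lra.
  have := pow_le x n (proj1 hx); nra.
rewrite /=; have := pow_le x n (proj1 hx); nra.
Qed.

Lemma pow_le1 (x : R) (n : nat) : 0 <= x <= 1 -> x ^ n <= 1.
Proof.
move=> hx; elim: n => [|n IH] /=; first lra.
have := pow_le x n (proj1 hx); nra.
Qed.

Lemma kl_term_self a : kl_term a a = Some 0.
Proof.
rewrite /kl_term; case: (Req_EM_T a 0) => [//|h1].
by rewrite /Rdiv Rinv_r // /log2 ln_1; congr Some; field; have := ln_lt_2; lra.
Qed.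

Lemma rall_ord (T : finType) (adj : rel T) (M : nat) (s : Omega adj M) (t : 'I_M) :
  rall s t = [forall e, s (t, e)].
Proof. by rewrite /rall valK. Qed.

Lemma bound_ge0 N M D : 0 <= chernoff_bound N M D.
Proof.
case: D => [d|] /=; last lra.
apply: Rmult_le_pos; first exact: pos_INR.
rewrite /Rpower; apply: Rlt_le; exact: exp_pos.
Qed.

Lemma theorem2_aux (T : finType) (adj : rel T)
  (adj_sym : symmetric adj) (adj_irr : irreflexive adj)
  (adj_conn : forall x y : T, connect adj x y) (two_vertices : (1 < #|T|)%nat)
  (p : R) (hp0 : (0 <= p)%R) (hp1 : (p <= 1)%R)
  (R' : R) (hR0 : (0 <= R')%R) (hR1 : (R' <= (1 - p) ^ nedges adj)%R)
  (M : nat) (hM : (1 <= M)%nat) :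
  (@Prob T adj p M
     (fun s : Omega adj M =>
        if Rlt_dec (IZR (min_nv s M)) (R' * INR M) then true else false)
   <= chernoff_bound #|T| M (KL R' ((1 - p) ^ nedges adj)))%R.
Proof.
have nbr : forall v, exists u, adj v u.
  move=> v.
  have [w hw] : exists w, w != v.
    case: (pickP (fun w => w != v)) => [w hw|H]; first by exists w.
    exfalso; move: two_vertices; rewrite (cardD1 v).
    have -> : #|[predD1 T & v]| = 0%nat.
      apply: eq_card0 => x; rewrite !inE; have := H x; by move=> /= ->.
    by case: (v \in T).
  case/connectP: (adj_conn v w) => [[|u pth]] /=.
    by move=> _ Hw; rewrite Hw eqxx in hw.
  case/andP => avu _ _; by exists u.
have [v0 _] : exists v0 : T, v0 \in T.
  by apply/card_gt0P; apply: ltnW.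
set q := (1 - p) ^ nedges adj.
have q0 : 0 <= q by apply: pow_le; lra.
have q1 : q <= 1 by apply: pow_le1; lra.
have hMpos : 0 < INR M by apply: lt_0_INR; apply/ltP.
have key : forall s : Omega adj M,
    (if Rlt_dec (IZR (min_nv s M)) (R' * INR M) then true else false) ->
    INR (Kn s M) < R' * INR M.
  move=> s; case: Rlt_dec => // h _.
  have := @min_nv_ge T adj M s adj_sym nbr v0 => /IZR_le.
  rewrite -INR_IZR_INZ; lra.
have wge := @weight_ge0 T adj p M hp0 hp1.
have total : \big[Rplus/0]_(s : Omega adj M) weight p s = 1.
  have := @factor T adj p M 1 1.
  rewrite /= (_ : (1 - p) ^ nedges adj * 1 + (1 - (1 - p) ^ nedges adj) * 1 = 1); last ring.
  rewrite pow1 => <-; apply: eq_bigr => s _.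
  rewrite big1 ?Rmult_1_r // => t _; by case: ifP.
have probT : Prob p
     (fun s : Omega adj M =>
        if Rlt_dec (IZR (min_nv s M)) (R' * INR M) then true else false)
   <= 1.
  rewrite -total /Prob; apply: sum_le => s; case: ifP => _; [lra | exact: wge].
have [HR|R'0] := Req_dec R' 0.
  subst R'.
  rewrite /Prob big1; first exact: bound_ge0.
  move=> s _; case: ifP => // h; have := key s h; have := pos_INR (Kn s M); lra.
have R'pos : 0 < R' by lra.
have [Rq|Rq] := Req_dec R' q.
  apply: (Rle_trans _ _ _ probT).
  rewrite Rq /KL !kl_term_self /=.
  rewrite Rplus_0_r Rmult_0_r /Rpower Rmult_0_l exp_0 Rmult_1_r.
  have : (1 <= #|T|)%coq_nat by apply/leP; apply: ltnW.
  move/le_INR; rewrite /=; lra.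
have Rlq : R' < q by case: (Rle_lt_or_eq_dec _ _ hR1) => // h; exfalso; apply: Rq; exact: h.
have [q1e|q1n] := Req_dec q 1.
  have -> : KL R' q = None.
    rewrite /KL /kl_term; destruct (Req_EM_T R' 0) as [h|h1]; first lra.
    destruct (Req_EM_T q 0) as [h|h2]; first lra.
    destruct (Req_EM_T (1 - R') 0) as [h|h3]; first lra.
    by destruct (Req_EM_T (1 - q) 0) as [h|h99]; [|lra].
  rewrite /Prob big1 /=; first lra.
  move=> s _; case: ifP => // h.
  have hK : (Kn s M < M)%nat.
    have := key s h; have : R' * INR M < INR M by nra.
    move=> h1 h2; apply/ltP; apply: INR_lt; lra.
  case: (boolP [forall t : 'I_M, rall s t]) => [/forallP hall|].
    exfalso; move: hK; rewrite /Kn (eq_bigr (fun _ => 1%nat)); last by move=> t _; rewrite hall.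
    by rewrite sum1_card card_ord ltnn.
  move=> /forallPn [t]; rewrite rall_ord => /forallPn [e he].
  have p0 : p = 0.
    have hn : nedges adj <> 0%nat.
      rewrite /nedges => h0; have : (0 < #|{: Edge adj}|)%nat by apply/card_gt0P; exists e.
      by rewrite h0.
    have := @pow_le_base (1 - p) _ ltac:(split; lra) hn.
    rewrite -/q q1e; lra.
  rewrite /weight (bigD1 (t, e)) //= (negbTE he) p0; ring.
have hq1 : q < 1 by lra.
set z := R' * (1 - q) / ((1 - R') * q).
have zpos : 0 < z by rewrite /z; apply: Rdiv_lt_0_compat; nra.
have zle1 : z <= 1.
  have d : 0 < (1 - R') * q by nra.
  rewrite /z /Rdiv; apply: (Rmult_le_reg_r ((1 - R') * q)) => //.
  rewrite Rmult_assoc Rinv_l; nra.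
set a := R' * INR M.
have Rppos : 0 < Rpower z a by rewrite /Rpower; exact: exp_pos.
have lnz : ln z <= 0.
  have [hz|hz] := Rle_lt_or_eq_dec _ _ zle1.
    have := ln_increasing _ _ zpos hz; rewrite ln_1; lra.
  by rewrite hz ln_1; lra.
apply: (Rle_trans _ (\big[Rplus/0]_(s : Omega adj M)
   (weight p s * \big[Rmult/1]_(t : 'I_M) (if [forall e, s (t, e)] then z else 1)
    * / Rpower z a))).
  apply: sum_le => s.
  have hprod : \big[Rmult/1]_(t : 'I_M) (if [forall e, s (t, e)] then z else 1)
      = z ^ Kn s M.
    rewrite /Kn -prod_if_pow; apply: eq_bigr => t _; by rewrite rall_ord.
  rewrite hprod.
  have zK0 : 0 <= z ^ Kn s M by apply: pow_le; lra.
  have hinv : 0 < / Rpower z a by apply: Rinv_0_lt_compat.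
  case: ifP => h; last by apply: Rmult_le_pos; [apply: Rmult_le_pos; [exact: wge|exact: zK0]|lra].
  have hK := key s h.
  have hle : Rpower z a <= z ^ Kn s M.
    rewrite -Rpower_pow // /Rpower.
    have : a * ln z <= INR (Kn s M) * ln z by rewrite /a; nra.
    case/Rle_lt_or_eq_dec => [hl|->]; last lra.
    apply: Rlt_le; exact: exp_increasing.
  have : 1 <= z ^ Kn s M * / Rpower z a.
    rewrite -(Rinv_r (Rpower z a)); last lra.
    apply: Rmult_le_compat_r; lra.
  have := wge s; nra.
rewrite -big_distrl /= (@factor T adj p M z 1) -/q.
rewrite chern_alg //.
have -> : KL R' q = Some (R' * log2 (R' / q) + (1 - R') * log2 ((1 - R') / (1 - q))).
  rewrite /KL /kl_term; destruct (Req_EM_T R' 0) as [h|h4]; first lra.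
  destruct (Req_EM_T q 0) as [h|h5]; first lra.
  destruct (Req_EM_T (1 - R') 0) as [h|h6]; first lra.
  by destruct (Req_EM_T (1 - q) 0) as [h|h7]; first lra.
rewrite /chernoff_bound.
have : (1 <= #|T|)%coq_nat by apply/leP; apply: ltnW.
move/le_INR => hN.
have : 0 < Rpower 2 (- INR M * (R' * log2 (R' / q) + (1 - R') * log2 ((1 - R') / (1 - q)))).
  rewrite /Rpower; exact: exp_pos.
rewrite /= in hN; nra.
Qed.

Local Close Scope R_scope.

Theorem theorem2 (T : finType) (adj : rel T)
  (adj_sym : symmetric adj) (adj_irr : irreflexive adj)
  (adj_conn : forall x y : T, connect adj x y) (two_vertices : 1 < #|T|)
  (p : R) (hp0 : (0 <= p)%R) (hp1 : (p <= 1)%R)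
  (R' : R) (hR0 : (0 <= R')%R) (hR1 : (R' <= (1 - p) ^ nedges adj)%R)
  (M : nat) (hM : 1 <= M) :
  (@Prob T adj p M
     (fun s : Omega adj M =>
        if Rlt_dec (IZR (min_nv s M)) (R' * INR M) then true else false)
   <= chernoff_bound #|T| M (KL R' ((1 - p) ^ nedges adj)))%R.
Proof. exact: theorem2_aux. Qed.
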